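(* For all integers $v\ge1$ and $0\le n\le v-1$, $$B^{(2v)}_{2n}(v)=(-1)^n(2n)!\,\frac{\Gamma(2v-2n)}{\Gamma(2v)}\,s(v,n)=(-1)^n\,2^{-2n}(2n)!\,c_{2v,n}.$$
   Context: The Nörlund polynomials (higher-order Bernoulli polynomials) $B^{(a)}_n(x)$ are defined by $\left(\frac{t}{e^t-1}\right)^a e^{xt}=\sum_{n\ge0}B^{(a)}_n(x)\frac{t^n}{n!}$. For integers $v\ge1$ and $0\le n\le v-1$, $s(v,n)$ denotes the $n$-th elementary symmetric polynomial evaluated at $1^2,2^2,\dots,(v-1)^2$, with $s(v,0)=1$. The generalized cosecant numbers $c_{\rho,k}$ are the coefficients in $\left(\frac{x}{\sin x}\right)^{\rho}=\sum_{k\ge0}c_{\rho,k}x^{2k}$. *)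

(* Defs.v *)
From HB Require Import structures.
From mathcomp Require Import all_boot all_order all_algebra.
Set Implicit Arguments. Unset Strict Implicit. Unset Printing Implicit Defensive.
Import Order.TTheory GRing.Theory Num.Theory.
Local Open Scope ring_scope.

Definition fps := nat -> rat.

Definition fps1 : fps := fun k => (k == 0%N)%:R.

Definition fpsmul (f g : fps) : fps :=
  fun k => \sum_(i < k.+1) f i * g (k - i)%N.

Definition fpspow (f : fps) (m : nat) : fps := iter m (fpsmul f) fps1.

(* multiplicative inverse of a series with nonzero constant term:
   inv_aux f k = [:: g 0; ...; g k] with f * g = 1 *)
Fixpoint fpsinv_aux (f : fps) (k : nat) : seq rat :=
  match k with
  | 0 => [:: (f 0%N)^-1]
  | k'.+1 =>
      let s := fpsinv_aux f k' in
      rcons s (- (f 0%N)^-1 * \sum_(i < k) f (k - i)%N * nth 0 s i)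
  end.

Definition fpsinv (f : fps) : fps := fun k => nth 0 (fpsinv_aux f k) k.

Definition fpsexp (x : rat) : fps := fun k => x ^+ k / (k`!)%:R.

(* (e^t - 1)/t = sum_k t^k/(k+1)! ; its inverse is t/(e^t-1) *)
Definition expm1_div_t : fps := fun k => ((k.+1)`!%:R)^-1.

(* Norlund polynomial B^{(a)}_n(x), for a natural-number order a:
   (t/(e^t-1))^a e^{xt} = sum_n B^{(a)}_n(x) t^n/n! *)
Definition norlund (a n : nat) (x : rat) : rat :=
  (n`!)%:R * fpsmul (fpspow (fpsinv expm1_div_t) a) (fpsexp x) n.

Definition sinc : fps :=
  fun j => if odd j then 0 else (-1) ^+ (j./2) / ((j.+1)`!)%:R.

(* generalized cosecant numbers: (x/sin x)^rho = sum_k c_{rho,k} x^{2k} *)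
Definition cosec_num (rho k : nat) : rat := fpspow (fpsinv sinc) rho (k.*2).

Definition esym_sq (v n : nat) : rat :=
  \sum_(S : {set 'I_v.-1} | #|S| == n) \prod_(i in S) ((i.+1 ^ 2)%N)%:R.

(* Main.v *)
Require Import Defs.
From HB Require Import structures.
From mathcomp Require Import all_boot all_order all_algebra.
From mathcomp Require Import boolp.
From mathcomp Require Import ring.
Set Implicit Arguments. Unset Strict Implicit. Unset Printing Implicit Defensive.
Import Order.TTheory GRing.Theory Num.Theory.
Local Open Scope ring_scope.


Definition agree (k : nat) (f : fps) (p : {poly rat}) :=
  forall i, (i <= k)%N -> p`_i = f i.

Definition P (k : nat) (f : fps) : {poly rat} := \poly_(i < k.+1) f i.

Lemma agreeP k f : agree k f (P k f).
Proof. by move=> i hi; rewrite coef_poly ltnS hi. Qed.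

Arguments agreeP : clear implicits.
Lemma agree1 k : agree k fps1 1.
Proof. by move=> i _; rewrite coef1 /fps1. Qed.
Arguments agree1 : clear implicits.

Lemma agree_le k j f p : agree k f p -> (j <= k)%N -> agree j f p.
Proof. by move=> h hj i hi; apply: h; apply: leq_trans hj. Qed.

Lemma mul_repr k f g p q : agree k f p -> agree k g q ->
  fpsmul f g k = (p * q)`_k.
Proof.
move=> hp hq; rewrite coefM /fpsmul; apply: eq_bigr => i _.
rewrite hp ?hq //; [exact: leq_subr | by rewrite -ltnS].
Qed.

Lemma agree_mul k f g p q : agree k f p -> agree k g q ->
  agree k (fpsmul f g) (p * q).
Proof.
move=> hp hq i hi; symmetry; apply: mul_repr.
  exact: agree_le hp hi.
exact: agree_le hq hi.
Qed.

Definition fpsadd (f g : fps) : fps := fun k => f k + g k.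
Definition fpsopp (f : fps) : fps := fun k => - f k.
Definition fps0 : fps := fun k => 0.

Lemma fps_ext (f g : fps) : (forall k, f k = g k) -> f = g.
Proof. by move=> h; apply: funext. Qed.

Lemma fpsaddA : associative fpsadd.
Proof. by move=> f g h; apply: fps_ext => k; rewrite /fpsadd addrA. Qed.
Lemma fpsaddC : commutative fpsadd.
Proof. by move=> f g; apply: fps_ext => k; rewrite /fpsadd addrC. Qed.
Lemma fpsadd0 : left_id fps0 fpsadd.
Proof. by move=> f; apply: fps_ext => k; rewrite /fpsadd /fps0 add0r. Qed.
Lemma fpsaddN : left_inverse fps0 fpsopp fpsadd.
Proof. by move=> f; apply: fps_ext => k; rewrite /fpsadd /fpsopp /fps0 addNr. Qed.

HB.instance Definition _ := gen_eqMixin fps.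
HB.instance Definition _ := gen_choiceMixin fps.
HB.instance Definition _ := GRing.isZmodule.Build fps fpsaddA fpsaddC fpsadd0 fpsaddN.

Lemma agree_add k f g p q : agree k f p -> agree k g q ->
  agree k (fpsadd f g) (p + q).
Proof. by move=> hp hq i hi; rewrite coefD hp ?hq. Qed.



Lemma fpsmulA : associative fpsmul.
Proof.
move=> f g h; apply: fps_ext => k.
rewrite (mul_repr (agreeP k f) (agree_mul (agreeP k g) (agreeP k h))).
by rewrite (mul_repr (agree_mul (agreeP k f) (agreeP k g)) (agreeP k h)) mulrA.
Qed.

Lemma fpsmulC : commutative fpsmul.
Proof.
move=> f g; apply: fps_ext => k.
by rewrite (mul_repr (agreeP k f) (agreeP k g)) (mul_repr (agreeP k g) (agreeP k f)) mulrC.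
Qed.

Lemma fpsmul1 : left_id fps1 fpsmul.
Proof.
move=> f; apply: fps_ext => k.
by rewrite (mul_repr (agree1 k) (agreeP k f)) mul1r (agreeP k f).
Qed.

Lemma fpsmulDl : left_distributive fpsmul fpsadd.
Proof.
move=> f g h; apply: fps_ext => k.
rewrite (mul_repr (agree_add (agreeP k f) (agreeP k g)) (agreeP k h)).
by rewrite mulrDl coefD -(mul_repr (agreeP k f) (agreeP k h)) -(mul_repr (agreeP k g) (agreeP k h)).
Qed.

Lemma fps1_neq0 : fps1 != fps0.
Proof.
apply/eqP => H; have := congr1 (fun f : fps => f 0%N) H.
by rewrite /fps1 /fps0 /= => /eqP; rewrite oner_eq0.
Qed.

HB.instance Definition _ := GRing.Zmodule_isComNzRing.Build fps fpsmulA fpsmulC fpsmul1 fpsmulDl fps1_neq0.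

Lemma mulE (f g : fps) : fpsmul f g = f * g. Proof. by []. Qed.
Lemma addE (f g : fps) (k : nat) : (f + g) k = f k + g k. Proof. by []. Qed.
Lemma addE2 (f g : fps) (k : nat) :
  @GRing.add (GRing.PzSemiRing.clone fps _) f g k = f k + g k. Proof. by []. Qed.
Lemma oppE (f : fps) (k : nat) : (- f) k = - f k. Proof. by []. Qed.
Lemma oneE : fps1 = 1. Proof. by []. Qed.
Lemma zeroE k : (0 : fps) k = 0. Proof. by []. Qed.


Lemma powE (f : fps) m : fpspow f m = f ^+ m.
Proof. elim: m => [|m IH] //=; by rewrite /fpspow /= -/(fpspow f m) IH exprS. Qed.

Lemma mulnE (f : fps) n k : (f *+ n) k = f k *+ n.
Proof. elim: n => [|n IH]; first by rewrite !mulr0n. by rewrite !mulrS addE IH. Qed.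

Lemma natE n k : (n%:R : fps) k = (k == 0%N)%:R * n%:R.
Proof. by rewrite mulnE mulr_natr. Qed.

Lemma mulnfE n (f : fps) k : (n%:R * f) k = n%:R * f k.
Proof. by rewrite mulr_natl mulnE mulr_natl. Qed.

Lemma coef_mul (f g : fps) k : (f * g) k = \sum_(i < k.+1) f i * g (k - i)%N.
Proof. by []. Qed.

Definition cst (c : rat) : fps := fun k => (k == 0%N)%:R * c.

Lemma cstM c (f : fps) k : (cst c * f) k = c * f k.
Proof.
rewrite coef_mul big_ord_recl /= /cst /= mul1r subn0 big1 ?addr0 // => i _.
by rewrite /bump /= mul0r mul0r.
Qed.

Definition tX : fps := fun k => (k == 1%N)%:R.

Lemma agreeX k : agree k tX 'X.
Proof. by move=> i _; rewrite coefX /tX. Qed.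

Arguments agreeX : clear implicits.
Lemma tXM (f : fps) k : (tX * f) k = if k is k'.+1 then f k' else 0.
Proof.
rewrite -mulE (mul_repr (agreeX k) (agreeP k f)) coefXM.
by case: k => [|k] //=; rewrite (agreeP k.+1 f) // leqnSn.
Qed.

Lemma tX_inj (f g : fps) : tX * f = tX * g -> f = g.
Proof.
move=> h; apply: fps_ext => k.
by have := congr1 (fun u : fps => u k.+1) h; rewrite !tXM.
Qed.
Lemma size_inv_aux f k : size (fpsinv_aux f k) = k.+1.
Proof. by elim: k => [|k IH] //=; rewrite size_rcons IH. Qed.

Lemma nth_inv_aux f k i : (i <= k)%N -> nth 0 (fpsinv_aux f k) i = fpsinv f i.
Proof.
elim: k => [|k IH].
  by rewrite leqn0 => /eqP ->.
rewrite leq_eqVlt => /orP [/eqP -> //|hi].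
by rewrite /= nth_rcons size_inv_aux hi IH.
Qed.

Lemma fpsinv_mul (f : fps) : f 0%N != 0 -> fpsinv f * f = 1.
Proof.
move=> hf; apply: fps_ext => k; rewrite coef_mul.
case: k => [|k].
  by rewrite big_ord1 /fpsinv /= subn0 mulVf.
rewrite big_ord_recr /= subnn /fpsinv /= nth_rcons size_inv_aux ltnn eqxx.
rewrite -/(fpsinv f) /fps1 /=.
set S := \sum_(i < k.+1) _.
have -> : S = \sum_(i < k.+1) f (k.+1 - i)%N * nth 0 (fpsinv_aux f k) i.
  apply: eq_bigr => i _; rewrite mulrC nth_inv_aux //; by rewrite -ltnS.
by rewrite mulrC mulrA mulrN mulfV // mulN1r addrN.
Qed.

Definition Dr (f : fps) : fps := fun k => k.+1%:R * f k.+1.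

Lemma agree_deriv k f p : agree k.+1 f p -> agree k (Dr f) p^`().
Proof.
by move=> h i hi; rewrite coef_deriv h // -mulr_natl.
Qed.

Lemma DrD (f g : fps) : Dr (f + g) = Dr f + Dr g.
Proof. by apply: fps_ext => k; rewrite addE /Dr addE mulrDr. Qed.

Lemma DrN (f : fps) : Dr (- f) = - Dr f.
Proof. by apply: fps_ext => k; rewrite oppE /Dr oppE mulrN. Qed.

Lemma DrM (f g : fps) : Dr (f * g) = Dr f * g + f * Dr g.
Proof.
apply: fps_ext => k.
rewrite /Dr -mulE (mul_repr (agreeP k.+1 f) (agreeP k.+1 g)) mulr_natl.
rewrite -coef_deriv derivM coefD addE -!mulE.
have hf := agree_deriv (agreeP k.+1 f); have hg := agree_deriv (agreeP k.+1 g).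
rewrite (mul_repr hf (agree_le (agreeP k.+1 g) (leqnSn k))).
by rewrite (mul_repr (agree_le (agreeP k.+1 f) (leqnSn k)) hg).
Qed.

Lemma Dr1 : Dr 1 = 0.
Proof. by apply: fps_ext => k; rewrite /Dr -oneE /fps1 /= mulr0. Qed.

Lemma DrX : Dr tX = 1.
Proof. apply: fps_ext => k; rewrite /Dr /tX -oneE /fps1 eqSS. by case: k => [|k]; rewrite /= ?mulr1 ?mulr0. Qed.

Lemma Drexp (f : fps) n : Dr (f ^+ n.+1) = n.+1%:R * f ^+ n * Dr f.
Proof.
elim: n => [|n IH]; first by rewrite expr1 expr0 mulr1 mul1r.
rewrite exprS DrM IH exprS; set a := f ^+ n; set d := Dr f.
rewrite [in RHS]mulrS [in LHS]mulrS; ring.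
Qed.
Lemma fact_neq0 n : (n`!)%:R != 0 :> rat.
Proof. by rewrite pnatr_eq0 -lt0n fact_gt0. Qed.

Lemma natS_neq0 n : 1 + n%:R != 0 :> rat.
Proof. by rewrite addrC natr1 pnatr_eq0. Qed.

Lemma nat_pos_neq0 (a : rat) : 0 <= a -> 1 + a != 0.
Proof. by move=> h; rewrite gt_eqF // ltr_wpDr. Qed.

Ltac fside := repeat (apply/andP; split); rewrite ?fact_neq0 ?natS_neq0 //;
  try (apply: nat_pos_neq0; by rewrite ?addr_ge0 ?ler0n); rewrite ?(addrC 1) -?natrD ?natr1 ?pnatr_eq0 //.

Lemma Dr_exp x : Dr (fpsexp x) = cst x * fpsexp x.
Proof.
apply: fps_ext => k; rewrite cstM /Dr /fpsexp factS natrM.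
rewrite exprS; field; fside.
Qed.

Lemma exp0 : fpsexp 0 = 1.
Proof.
apply: fps_ext => k; rewrite /fpsexp -oneE /fps1.
by case: k => [|k]; rewrite ?expr0 ?fact0 ?divr1 // expr0n mul0r.
Qed.

Lemma expD x y : fpsexp x * fpsexp y = fpsexp (x + y).
Proof.
apply: fps_ext => k; rewrite coef_mul /fpsexp [x + y]addrC exprDn.
rewrite [in RHS]mulr_suml; apply: eq_bigr => [[i hi]] _ /=.
rewrite ltnS in hi.
have := bin_fact hi => hb.
have hk : (k`!)%:R = ('C(k, i))%:R * ((i`!)%:R * ((k - i)`!)%:R) :> rat.
  by rewrite -!natrM hb.
rewrite hk -mulr_natr.
have h3 : ('C(k, i))%:R != 0 :> rat by rewrite pnatr_eq0 -lt0n bin_gt0.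
field; fside.
Qed.

Lemma expX x m : fpsexp x ^+ m = fpsexp (m%:R * x).
Proof.
elim: m => [|m IH]; first by rewrite mul0r exp0.
by rewrite exprS IH expD mulrSr mulrDl mul1r addrC.
Qed.

Definition E := expm1_div_t.
Definition G := fpsinv E.

Lemma GE : G * E = 1.
Proof. apply: fpsinv_mul; change ((1`!)%:R^-1 != 0 :> rat). by rewrite invr_eq0 fact_neq0. Qed.

Lemma tXE : tX * E = fpsexp 1 - 1.
Proof.
apply: fps_ext => k; rewrite tXM addE oppE /fpsexp expr1n -oneE /fps1.
case: k => [|k] /=; first by rewrite fact0 divr1 subrr.
by rewrite subr0 /E /expm1_div_t mul1r.
Qed.

Lemma EDE : E + tX * Dr E = fpsexp 1.
Proof.
apply: fps_ext => k; rewrite addE tXM /fpsexp expr1n mul1r.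
case: k => [|k] /=; first by rewrite addr0.
rewrite /Dr /E /expm1_div_t (factS k.+1) natrM.
field; fside.
Qed.

Lemma G_ode : tX * Dr G = G - tX * G - G ^+ 2.
Proof.
have h1 := GE.
have h2 : Dr G * E + G * Dr E = 0 by rewrite -DrM GE Dr1.
have h3 := EDE. have h4 := tXE.
apply/eqP; rewrite -subr_eq0; apply/eqP.
set u1 := 1 - G * E. set u2 := Dr G * E + G * Dr E.
set u3 := E + tX * Dr E - fpsexp 1. set u4 := tX * E - fpsexp 1 + 1.
have -> : tX * Dr G - (G - tX * G - G ^+ 2) =
  u1 * (tX * Dr G - G + tX * G) + tX * G * u2 - G ^+ 2 * u3 + G ^+ 2 * u4.
  rewrite /u1 /u2 /u3 /u4; ring.
rewrite /u1 /u2 /u3 /u4 h1 h2 h3 h4; ring.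
Qed.
Definition phi (x : rat) (a : nat) : fps := G ^+ a * fpsexp x.

Lemma phi_eq x b :
  tX * Dr (phi x b.+1) = b.+1%:R * phi x b.+1 + cst x * (tX * phi x b.+1)
     - b.+1%:R * (tX * phi x b.+1) - b.+1%:R * phi x b.+2.
Proof.
rewrite /phi DrM Drexp Dr_exp mulrDr.
have h := G_ode.
have -> : tX * (b.+1%:R * G ^+ b * Dr G * fpsexp x) =
   b.+1%:R * G ^+ b * (tX * Dr G) * fpsexp x by ring.
rewrite h !exprS; ring.
Qed.

Lemma tXDr (f : fps) k : (tX * Dr f) k = k%:R * f k.
Proof. by rewrite tXM; case: k => [|k] //=; rewrite mul0r. Qed.

Lemma phi_coef x b k :
  k%:R * phi x b.+1 k = b.+1%:R * phi x b.+1 k + x * (tX * phi x b.+1) k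
     - b.+1%:R * (tX * phi x b.+1) k - b.+1%:R * phi x b.+2 k.
Proof.
have := congr1 (fun u : fps => u k) (phi_eq x b).
by rewrite tXDr /= !addE2 !oppE cstM !mulnfE.
Qed.

Lemma phi0 x b : phi x b.+2 0%N = phi x b.+1 0%N.
Proof.
have := phi_coef x b 0; rewrite tXM => h.
have hc : b.+1%:R != 0 :> rat by rewrite pnatr_eq0.
apply: (mulfI hc); apply/eqP; rewrite -subr_eq0; apply/eqP.
move/eqP: h; rewrite -subr_eq0 => /eqP h; rewrite -[RHS]h; ring.
Qed.

Lemma phiS x b k : b.+1%:R * phi x b.+2 k.+1 =
   (b.+1%:R - k.+1%:R) * phi x b.+1 k.+1 + (x - b.+1%:R) * phi x b.+1 k.
Proof.
have := phi_coef x b k.+1; rewrite tXM => h.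
apply/eqP; rewrite -(subr_eq0); apply/eqP.
move/eqP: h; rewrite -subr_eq0 => /eqP h; rewrite -[RHS]h; ring.
Qed.

Lemma phi1_0 x : phi x 1 0%N = 1.
Proof.
rewrite /phi expr1 coef_mul big_ord1 /= subn0 /fpsexp.
have -> : x ^+ 0 / 0`!%:R = 1 by rewrite expr0 /= mul1r invr1.
by [].
Qed.
Definition rp (x : rat) (m : nat) : {poly rat} :=
  \prod_(j < m) (1 + (x - j.+1%:R)%:P * 'X).

Lemma rp0 x : rp x 0 = 1.
Proof. by rewrite /rp big_ord0. Qed.

Lemma rpS x m k : (rp x m.+1)`_k =
  (rp x m)`_k + (if k is k'.+1 then (x - m.+1%:R) * (rp x m)`_k' else 0).
Proof.
rewrite /rp big_ord_recr /= -/(rp x m) mulrDr mulr1 coefD mulrA coefMX coefMC.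
by case: k => [|k] //=; rewrite mulrC.
Qed.

Lemma rp_big x m k : (m < k)%N -> (rp x m)`_k = 0.
Proof.
elim: m k => [|m IH] k hk.
  by rewrite rp0 coef1; case: k hk.
rewrite rpS IH ?(ltn_trans _ hk) // add0r.
by case: k hk => [|k] //= hk; rewrite IH ?mulr0.
Qed.

Lemma phi_formula x m k : (k <= m)%N ->
  phi x m.+1 k = (m - k)`!%:R / m`!%:R * (rp x m)`_k.
Proof.
elim: m k => [|m IH] k hk.
  move: hk; rewrite leqn0 => /eqP ->.
  by rewrite phi1_0 rp0 coef1 /= divr1 mulr1.
case: k hk => [|j] hk.
  rewrite phi0 IH // rpS !subn0 addr0.
  field; fside.
have hm : m.+1%:R != 0 :> rat by rewrite pnatr_eq0.
apply: (mulfI hm); rewrite phiS.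
rewrite [phi x m.+1 j]IH; last by rewrite -ltnS.
rewrite rpS.
move: hk; rewrite ltnS leq_eqVlt => /orP [/eqP ej | hj].
  subst j; rewrite subrr mul0r add0r (rp_big _ (ltnSn m)) add0r !subnn factS natrM.
  field; fside.
rewrite IH // subSS.
have [d ->] : exists d, m = (j + d).+1.
  by exists (m - j.+1)%N; rewrite -addSn subnKC.
rewrite subSS addKn -addnS addKn.
rewrite (factS (j + d.+1)) (factS d) !natrM.
field; fside.
Qed.
Definition Tp (w : nat) : {poly rat} :=
  \prod_(i < w) (1 - (((i.+1 ^ 2)%N)%:R)%:P * 'X^2).

Lemma rp_T w : rp (w.+1)%:R (w.*2.+1) = Tp w.
Proof.
elim: w => [|w IH].
  by rewrite /rp /Tp big_ord1 big_ord0 subrr polyC0 mul0r addr0.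
rewrite /rp doubleS big_ord_recl.
have e : forall i : 'I_(w.*2.+2),
    (w.+2%:R - (lift ord0 i).+1%:R) = (w.+1%:R - i.+1%:R) :> rat.
  move=> i; rewrite lift0 -!natr1; ring.
under eq_bigr => i _ do rewrite e.
rewrite big_ord_recr /= -/(rp _ _) IH /Tp big_ord_recr /=.
rewrite mulrCA; congr (_ * _).
have h1 : (w.+2%:R - 1) = (w.+1)%:R :> rat by rewrite -natr1 addrK.
have h2 : (w.+1%:R - (w.*2.+2)%:R) = - (w.+1)%:R :> rat.
  by rewrite -addnn -!natr1 !natrD; ring.
rewrite h1 h2 polyCN natrX polyC_exp.
ring.
Qed.

Lemma coef_signX (m k i : nat) : ((-1) ^+ m * 'X^k : {poly rat})`_i = (-1) ^+ m * (i == k)%:R.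
Proof. rewrite -signr_odd -[(-1) ^+ m : rat]signr_odd; case: (odd m); by rewrite /= ?expr1 ?expr0 ?mulN1r ?mul1r ?coefN coefXn. Qed.

Lemma Tp_coef w n : (Tp w)`_(n.*2) =
  (-1) ^+ n * \sum_(S : {set 'I_w} | #|S| == n) \prod_(i in S) ((i.+1 ^ 2)%N)%:R.
Proof.
set a := fun i : 'I_w => ((i.+1 ^ 2)%N)%:R : rat.
have -> : Tp w = \prod_(i < w) ((a i)%:P * (- 'X^2) + 1).
  by rewrite /Tp; apply: eq_bigr => i _; rewrite /a addrC mulrN.
rewrite bigA_distr coef_sum.
rewrite [in RHS]big_mkcond mulr_sumr; apply: eq_big => // J _.
have -> : \prod_i (if i \in J then (a i)%:P * - 'X^2 else 1) =
   (\prod_(i in J) a i)%:P * (- 'X^2) ^+ #|J|.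
  by rewrite -big_mkcond big_split /= rmorph_prod prodr_const.
rewrite [(- _) ^+ #|J|]exprNn -exprM coefCM coef_signX.
rewrite -muln2 mulnC eqn_pmul2l // eq_sym.
case: eqP => [-> | _]; last by rewrite !mulr0.
by rewrite /= mulr1 mulrC.
Qed.
Lemma norlund_phi a k x : norlund a k x = (k`!)%:R * phi x a k.
Proof. by rewrite /norlund /phi mulE powE. Qed.

Lemma part1 (v n : nat) (hv : (1 <= v)%N) (hn : (n <= v - 1)%N) :
  norlund (v.*2) (n.*2) v%:R
    = (-1) ^+ n * ((n.*2)`!)%:R
      * (((v.*2 - n.*2).-1`!)%:R / ((v.*2).-1`!)%:R) * esym_sq v n.
Proof.
case: v hv hn => [//|w] _ hn.
have hn' : (n <= w)%N by move: hn; rewrite subn1.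
have h1 : (n.*2 <= w.*2.+1)%N by rewrite -!muln2 ltnW // ltnS leq_mul2r hn' orbT.
have h2 : ((w.*2.+2 - n.*2).-1 = w.*2.+1 - n.*2)%N.
  by rewrite subSn // -!muln2 ltnS leq_mul2r hn' orbT.
rewrite norlund_phi doubleS (phi_formula _ h1) rp_T Tp_coef h2.
rewrite /esym_sq -[(w.*2.+2).-1]/(w.*2.+1).
set A := \sum_(S | _) _; set B := (n.*2)`!%:R; set C := _ / _.
ring.
Qed.
Definition nu (f : fps) : fps := fun k => (-1) ^+ k * f k.
Definition even (f : fps) := forall k, odd k -> f k = 0.
Definition mu (k : nat) : rat := (-1) ^+ (k./2) * (2^-1) ^+ k.
Definition psi (f : fps) : fps := fun k => mu k * f k.

Lemma inv_unique (a b c : fps) : a * b = 1 -> c * b = 1 -> a = c.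
Proof.
by move=> h1 h2; rewrite -[a]mulr1 -h2 mulrCA h1 mulr1.
Qed.

Lemma nuM f g : nu (f * g) = nu f * nu g.
Proof.
apply: fps_ext => k; rewrite /nu !coef_mul mulr_sumr; apply: eq_bigr => [[i hi]] _ /=.
have e : k = (i + (k - i))%N by rewrite subnKC // -ltnS.
rewrite {1}e exprD; ring.
Qed.

Lemma nu1 : nu 1 = 1.
Proof.
apply: fps_ext => k; rewrite /nu -oneE /fps1.
by case: k => [|k] /=; rewrite ?expr0 ?mul1r ?mulr0.
Qed.

Lemma even_nu f : even f -> nu f = f.
Proof.
move=> h; apply: fps_ext => k; rewrite /nu -signr_odd.
by case hk: (odd k); rewrite /= ?expr0 ?mul1r // h // mulr0.
Qed.

Lemma nu_even f : nu f = f -> even f.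
Proof.
move=> h k hk; have := congr1 (fun u : fps => u k) h.
rewrite /nu -signr_odd hk /= expr1 mulN1r => h'.
have : f k + f k = 0 by rewrite -{1}h' addNr.
by rewrite -mulr2n -mulr_natr => /eqP; rewrite mulf_eq0 pnatr_eq0 orbF => /eqP.
Qed.

Lemma even1 : even 1.
Proof. by move=> k; rewrite -oneE /fps1; case: k. Qed.

Lemma evenM f g : even f -> even g -> even (f * g).
Proof. by move=> hf hg; apply: nu_even; rewrite nuM !even_nu. Qed.

Lemma evenX f m : even f -> even (f ^+ m).
Proof.
move=> hf; elim: m => [|m IH]; first exact: even1.
by rewrite exprS; apply: evenM.
Qed.

Lemma psiM f g : even f -> even g -> psi (f * g) = psi f * psi g.
Proof.
move=> hf hg; apply: fps_ext => k; rewrite /psi !coef_mul mulr_sumr.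
apply: eq_bigr => [[i hi]] _ /=.
case hoi: (odd i); first by rewrite (hf _ hoi) !(mul0r, mulr0).
case hoj: (odd (k - i)); first by rewrite (hg _ hoj) !(mul0r, mulr0).
have e : k = (i + (k - i))%N by rewrite subnKC // -ltnS.
rewrite /mu {1 2}e halfD hoi /= add0n !exprD; ring.
Qed.

Lemma psi1 : psi 1 = 1.
Proof.
apply: fps_ext => k; rewrite /psi -oneE /fps1.
by case: k => [|k] /=; rewrite ?mulr0 // /mu /= !expr0 !mul1r.
Qed.

Lemma psiX f m : even f -> psi (f ^+ m) = psi f ^+ m.
Proof.
move=> hf; elim: m => [|m IH]; first by rewrite !expr0 psi1.
by rewrite !exprS psiM ?IH //; apply: evenX.
Qed.

Lemma sinc_even : even sinc.
Proof. by move=> k hk; rewrite /sinc hk. Qed.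

Definition M := fpsinv sinc.

Lemma Msinc : M * sinc = 1.
Proof. by apply: fpsinv_mul; rewrite /sinc /=. Qed.

Lemma M_even : even M.
Proof.
apply: nu_even; apply: (inv_unique (b := sinc)).
  by rewrite -(even_nu sinc_even) -nuM Msinc nu1.
exact: Msinc.
Qed.

Definition S := psi sinc.
Definition half : rat := 2^-1.

Lemma tXS : tX * S = fpsexp half - fpsexp (- half).
Proof.
apply: fps_ext => k; rewrite tXM addE oppE /fpsexp.
case: k => [|k]; first by rewrite !expr0 subrr.
rewrite /S /psi /mu /sinc [(- half) ^+ _]exprNn -[(-1) ^+ k.+1]signr_odd /=.
case hk: (odd k).
  by rewrite mulr0 /= expr0 mul1r subrr.
rewrite /= expr1.
set s := (-1) ^+ k./2.
have hs : s * s = 1 by rewrite -expr2 sqrr_sign.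
transitivity (s * s * (2^-1 ^+ k / (k.+1)`!%:R)); first by ring.
rewrite hs mul1r /half exprS.
field; fside.
Qed.

Lemma SexpE : S * fpsexp half = E.
Proof.
apply: tX_inj; rewrite mulrA tXS tXE mulrBl !expD.
have -> : half + half = 1 by rewrite /half; field.
by rewrite addNr exp0.
Qed.

Definition K := G * fpsexp half.

Lemma KS : K * S = 1.
Proof. by rewrite /K -mulrA (mulrC (fpsexp half)) SexpE GE. Qed.

Lemma psiMK : psi M = K.
Proof.
apply: (inv_unique (b := S)); last exact: KS.
by rewrite /S -psiM ?Msinc ?psi1 //; [exact: M_even | exact: sinc_even].
Qed.

Lemma phi_psi v : phi v%:R (v.*2) = psi (M ^+ (v.*2)).
Proof.
rewrite psiX; last exact: M_even.
rewrite psiMK /K exprMn expX /phi.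
have -> : (v.*2)%:R * half = v%:R by rewrite -muln2 natrM /half; field.
by [].
Qed.

Lemma part2 (v n : nat) :
  norlund (v.*2) (n.*2) v%:R
    = (-1) ^+ n * (2 ^- (n.*2)) * ((n.*2)`!)%:R * cosec_num (v.*2) n.
Proof.
rewrite norlund_phi phi_psi /cosec_num powE /psi /mu doubleK -exprVn -/M.
ring.
Qed.

Unset Implicit Arguments.

(* Gamma(2v-2n)/Gamma(2v) = (2v-2n-1)!/(2v-1)! for integer arguments *)
Theorem mainTheorem11 (v n : nat) (hv : (1 <= v)%N) (hn : (n <= v - 1)%N) :
  norlund (v.*2) (n.*2) v%:R
    = (-1) ^+ n * ((n.*2)`!)%:R
      * (((v.*2 - n.*2).-1`!)%:R / ((v.*2).-1`!)%:R) * esym_sq v n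
  /\ norlund (v.*2) (n.*2) v%:R
    = (-1) ^+ n * (2 ^- (n.*2)) * ((n.*2)`!)%:R * cosec_num (v.*2) n.
Proof.
split; [exact: part1 | exact: part2].
Qed.
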